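(* Let $\phi:\mathbb{M}_n\to\mathbb{M}_m$ be a positive linear map with Hilbert–Schmidt adjoint $\phi^*$. The following are equivalent: (1) $\phi(K^*K)\geq\phi(K)^*\phi(K)$ for all $K\in\mathbb{M}_n$; (2) for every positive definite $X\in\mathbb{M}_m$, the block operator \[ \begin{pmatrix} R_{\phi^*(X)} & \phi^*\\ \phi & R_X^{-1}\end{pmatrix}\in B(\mathcal{H}_n\oplus\mathcal{H}_m) \] is positive semidefinite.
   Context: $\mathcal{H}_n$ denotes $\mathbb{M}_n$ (complex $n\times n$ matrices) equipped with the Hilbert–Schmidt inner product $\langle A,B\rangle=\mathrm{Tr}[A^*B]$; $\phi$ is viewed as an operator $\mathcal{H}_n\to\mathcal{H}_m$ and $\phi^*:\mathcal{H}_m\to\mathcal{H}_n$ is its adjoint. For $X\in\mathbb{M}_k$, $R_X$ is the operator on $\mathcal{H}_k$ given by $R_X(A)=AX$. The block operator has $R_{\phi^*(X)}$ acting on $\mathcal{H}_n$, $\phi^*$ mapping $\mathcal{H}_m\to\mathcal{H}_n$, $\phi$ mapping $\mathcal{H}_n\to\mathcal{H}_m$, and $R_X^{-1}$ acting on $\mathcal{H}_m$. A positive map sends positive semidefinite matrices to positive semidefinite matrices. *)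

(* Defs.v *)
From HB Require Import structures.
From mathcomp Require Import all_boot all_order all_algebra.
From mathcomp Require Import reals.
From mathcomp.real_closed Require Import complex.
Set Implicit Arguments. Unset Strict Implicit. Unset Printing Implicit Defensive.
Import Order.TTheory GRing.Theory Num.Theory.
Local Open Scope ring_scope.

Section Defs.
Variable C : numClosedFieldType.

Definition ctr {p q} (A : 'M[C]_(p, q)) : 'M[C]_(q, p) := (map_mx Num.conj A)^T.

Definition hs {p} (A B : 'M[C]_p) : C := \tr (ctr A *m B).

Definition psdmx {k} (A : 'M[C]_k) : Prop :=
  ctr A = A /\ forall v : 'cV[C]_k, 0 <= (ctr v *m A *m v) 0 0.

Definition pdmx {k} (A : 'M[C]_k) : Prop :=
  ctr A = A /\ forall v : 'cV[C]_k, v != 0 -> 0 < (ctr v *m A *m v) 0 0.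

Definition loewner_le {k} (A B : 'M[C]_k) : Prop := psdmx (B - A).

Definition positive_map {n m} (phi : 'M[C]_n -> 'M[C]_m) : Prop :=
  forall A, psdmx A -> psdmx (phi A).

Definition hs_adjoint {n m} (phi : 'M[C]_n -> 'M[C]_m) (phis : 'M[C]_m -> 'M[C]_n)
  : Prop := forall (A : 'M[C]_n) (Y : 'M[C]_m), hs (phis Y) A = hs Y (phi A).

Definition Rop {k} (X : 'M[C]_k) : 'M[C]_k -> 'M[C]_k := fun A => A *m X.

(* the block operator [[R_{phi^*(X)}, phi^*], [phi, R_X^{-1}]] on H_n (+) H_m *)
Definition block_op {n m} (phi : 'M[C]_n -> 'M[C]_m) (phis : 'M[C]_m -> 'M[C]_n)
  (X : 'M[C]_m) (AB : 'M[C]_n * 'M[C]_m) : 'M[C]_n * 'M[C]_m :=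
  (Rop (phis X) AB.1 + phis AB.2, phi AB.1 + Rop (invmx X) AB.2).

Definition hs_sum {n m} (x y : 'M[C]_n * 'M[C]_m) : C := hs x.1 y.1 + hs x.2 y.2.

Definition psd_op {n m} (T : 'M[C]_n * 'M[C]_m -> 'M[C]_n * 'M[C]_m) : Prop :=
  forall x, 0 <= hs_sum x (T x).
End Defs.

(* Main.v *)
Require Import Defs.
From HB Require Import structures.
From mathcomp Require Import all_boot all_order all_algebra.
From mathcomp Require Import reals.
From mathcomp.real_closed Require Import complex.
From mathcomp Require Import ring.
Import Order.TTheory GRing.Theory Num.Theory.
Local Open Scope ring_scope.
Set Implicit Arguments. Unset Strict Implicit. Unset Printing Implicit Defensive.

Lemma ctrK {C : numClosedFieldType} p q (A : 'M[C]_(p, q)) : ctr (ctr A) = A.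
Proof. by apply/matrixP => i j; rewrite !mxE conjCK. Qed.

Lemma ctrM {C : numClosedFieldType} p q r (A : 'M[C]_(p, q)) (B : 'M[C]_(q, r)) :
  ctr (A *m B) = ctr B *m ctr A.
Proof. by rewrite /ctr map_mxM trmx_mul. Qed.

Lemma ctrD {C : numClosedFieldType} p q (A B : 'M[C]_(p, q)) :
  ctr (A + B) = ctr A + ctr B.
Proof. by apply/matrixP => i j; rewrite !mxE rmorphD. Qed.

Lemma ctrN {C : numClosedFieldType} p q (A : 'M[C]_(p, q)) :
  ctr (- A) = - ctr A.
Proof. by apply/matrixP => i j; rewrite !mxE rmorphN. Qed.

Lemma ctrZ {C : numClosedFieldType} p q (a : C) (A : 'M[C]_(p, q)) :
  ctr (a *: A) = a^* *: ctr A.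
Proof. by apply/matrixP => i j; rewrite !mxE rmorphM. Qed.

Lemma ctr1 {C : numClosedFieldType} p : ctr (1%:M : 'M[C]_p) = 1%:M.
Proof. by apply/matrixP => i j; rewrite !mxE eq_sym; case: (_ == _); rewrite ?rmorph1 ?rmorph0. Qed.

Lemma trC {C : numClosedFieldType} p (A : 'M[C]_p) : (\tr A)^* = \tr (ctr A).
Proof. rewrite /ctr mxtrace_tr /mxtrace rmorph_sum; apply: eq_bigr => i _; by rewrite mxE. Qed.

Lemma hsC {C : numClosedFieldType} p (A B : 'M[C]_p) : hs A B = (hs B A)^*.
Proof. by rewrite /hs trC ctrM ctrK. Qed.

Lemma psd_diag_ge0 {C : numClosedFieldType} p q (Z : 'M[C]_(p, q)) (P : 'M[C]_q) i :
  psdmx P -> 0 <= (Z *m P *m ctr Z) i i.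
Proof.
move=> [_ HP]; have := HP (ctr (row i Z)); rewrite ctrK.
suff -> : (row i Z *m P *m ctr (row i Z)) 0 0 = (Z *m P *m ctr Z) i i by [].
rewrite !mxE; apply: eq_bigr => k _; rewrite !mxE; congr (_ * _).
by apply: eq_bigr => j _; rewrite mxE.
Qed.

Lemma psd_tr_ge0 {C : numClosedFieldType} p q (Z : 'M[C]_(p, q)) (P : 'M[C]_q) :
  psdmx P -> 0 <= \tr (Z *m P *m ctr Z).
Proof. by move=> HP; rewrite /mxtrace; apply: sumr_ge0 => i _; apply: psd_diag_ge0. Qed.

Lemma ctrE {C : numClosedFieldType} p q (A : 'M[C]_(p, q)) : ctr A = (A ^t Num.conj)%sesqui.
Proof. by rewrite /ctr map_trmx. Qed.

Lemma tr_psd_mul {C : numClosedFieldType} k (D X : 'M[C]_k) :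
  psdmx D -> psdmx X -> 0 <= \tr (D *m X).
Proof.
move=> HD HX; have Xh := HX.1.
have Xn : X \is normalmx by apply/normalmxP; rewrite -ctrE Xh.
have /orthomx_spectralP := Xn.
set U := spectralmx X; set d := spectral_diag X => EX.
have Uu : U \is unitarymx := spectral_unitarymx X.
have UU : U *m ctr U = 1%:M by rewrite ctrE; apply/unitarymxP.
have iU : invmx U = ctr U by rewrite ctrE invmx_unitary.
rewrite iU in EX.
have Ed : U *m X *m ctr U = diag_mx d.
  by rewrite EX !mulmxA UU mul1mx -mulmxA UU mulmx1.
rewrite EX !mulmxA mxtrace_mulC !mulmxA mul_mx_diag /mxtrace.
apply: sumr_ge0 => i _; rewrite mxE; apply: mulr_ge0; first exact: psd_diag_ge0.
have := psd_diag_ge0 U i HX; rewrite Ed mxE eqxx mulr1n //.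
Qed.

Lemma ctr0 {C : numClosedFieldType} p q : ctr (0 : 'M[C]_(p, q)) = 0.
Proof. by apply/matrixP => i j; rewrite !mxE rmorph0. Qed.

Lemma pd_psd {C : numClosedFieldType} k (X : 'M[C]_k) : pdmx X -> psdmx X.
Proof.
move=> [Xh HX]; split => // v; have [->|v0] := eqVneq v 0.
  by rewrite mulmx0 mxE.
exact/ltW/HX.
Qed.

Lemma pd_unit {C : numClosedFieldType} k (X : 'M[C]_k) : pdmx X -> X \in unitmx.
Proof.
move=> [Xh HX]; rewrite unitmxE unitfE; apply/negP => /det0P [v v0 vX].
have w0 : ctr v != 0.
  by apply: contraNneq v0 => h; rewrite -(ctrK v) h ctr0.
have := HX _ w0; rewrite ctrK vX mul0mx mxE ltxx //.
Qed.

Lemma inv_psd {C : numClosedFieldType} k (X : 'M[C]_k) : pdmx X -> psdmx (invmx X).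
Proof.
move=> HX; have Xu := pd_unit HX; have [Xh _] := HX; have [_ HXp] := pd_psd HX.
have Hh : ctr (invmx X) = invmx X.
  rewrite -[ctr _]mulmx1 -(mulmxV Xu) mulmxA -{2}Xh -ctrM mulmxV // ctr1 mul1mx //.
split => // v.
have -> : invmx X = invmx X *m X *m invmx X by rewrite mulVmx // mul1mx.
have := HXp (invmx X *m v); rewrite ctrM Hh !mulmxA //.
Qed.

Lemma hsDr {C : numClosedFieldType} k (A B B' : 'M[C]_k) : hs A (B + B') = hs A B + hs A B'.
Proof. by rewrite /hs mulmxDr mxtraceD. Qed.

Lemma Qexp {C : numClosedFieldType} n m (phi : 'M[C]_n -> 'M[C]_m) phis (X : 'M[C]_m) K Y :
  hs_adjoint phi phis -> ctr X = X -> ctr (phi (ctr K *m K)) = phi (ctr K *m K) ->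
  hs_sum (K, Y) (block_op phi phis X (K, Y)) =
  \tr (phi (ctr K *m K) *m X) + (\tr (ctr Y *m phi K))^* + \tr (ctr Y *m phi K)
  + \tr (ctr Y *m Y *m invmx X).
Proof.
move=> adj Xh Ph; rewrite /hs_sum /block_op /Rop /= !hsDr.
have -> : hs K (phis Y) = (\tr (ctr Y *m phi K))^* by rewrite hsC adj.
have -> : hs Y (Y *m invmx X) = \tr (ctr Y *m Y *m invmx X) by rewrite /hs mulmxA.
have -> : hs K (K *m phis X) = \tr (phi (ctr K *m K) *m X).
  have Kh : ctr (ctr K *m K) = ctr K *m K by rewrite ctrM ctrK.
  rewrite /hs mulmxA -{1}Kh -/(hs _ _) hsC adj /hs Xh trC ctrM Ph Xh //.
rewrite /hs; rewrite -!addrA; congr (_ + _); rewrite addrC -addrA; congr (_ + _); rewrite addrC //.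
Qed.

Lemma psd1 {C : numClosedFieldType} k : psdmx (1%:M : 'M[C]_k).
Proof.
split; first exact: ctr1.
move=> v; rewrite mulmx1 mxE; apply: sumr_ge0 => i _; rewrite !mxE mulrC.
exact: mul_conjC_ge0.
Qed.

Lemma psd_gram {C : numClosedFieldType} p q (K : 'M[C]_(p, q)) : psdmx (ctr K *m K).
Proof.
split; first by rewrite ctrM ctrK.
move=> v; have := psd_diag_ge0 (ctr (K *m v)) 0 (psd1 p).
by rewrite mulmx1 ctrK ctrM !mulmxA.
Qed.

Lemma dir12 {C : numClosedFieldType} n m (phi : 'M[C]_n -> 'M[C]_m) phis :
  positive_map phi -> hs_adjoint phi phis ->
  (forall K, loewner_le (ctr (phi K) *m phi K) (phi (ctr K *m K))) ->
  forall X, pdmx X -> psd_op (block_op phi phis X).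
Proof.
move=> pos adj H1 X HX [K Y].
have Xu := pd_unit HX; have Xh := HX.1.
have Ph : ctr (phi (ctr K *m K)) = phi (ctr K *m K).
  exact: (pos _ (psd_gram K)).1.
rewrite Qexp //.
set L := phi K; set F := phi (ctr K *m K); set Xi := invmx X.
set w := \tr (ctr Y *m L).
have t1 : \tr (L *m X *m Xi *m (X *m ctr L)) = \tr (ctr L *m L *m X).
  by rewrite mulmxK // mulmxA mxtrace_mulC mulmxA.
have t2 : \tr (L *m X *m Xi *m ctr Y) = w.
  by rewrite mulmxK // mxtrace_mulC.
have t3 : \tr (Y *m Xi *m (X *m ctr L)) = w^*.
  by rewrite mulmxA mulmxKV // trC ctrM ctrK mxtrace_mulC.
have t4 : \tr (Y *m Xi *m ctr Y) = \tr (ctr Y *m Y *m Xi).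
  by rewrite mxtrace_mulC mulmxA.
have E : \tr (F *m X) + w^* + w + \tr (ctr Y *m Y *m Xi) =
   \tr ((L *m X + Y) *m Xi *m ctr (L *m X + Y)) + \tr ((F - ctr L *m L) *m X).
  rewrite mulmxBl linearB /= ctrD ctrM Xh !(mulmxDl, mulmxDr) !mxtraceD t1 t2 t3 t4.
  ring.
rewrite E; apply: addr_ge0.
  by apply: psd_tr_ge0; apply: inv_psd.
by apply: tr_psd_mul; [apply: H1 | apply: pd_psd].
Qed.

Lemma eps_arg {C : numClosedFieldType} (a t : C) : a \is Num.real -> t \is Num.real ->
  (forall e : C, 0 < e -> 0 <= a + e * t) -> 0 <= a.
Proof.
move=> ra rt H; rewrite real_leNgt ?real0 //; apply/negP => alt.
have n1 : 0 < `|t| + 1 by apply: ltr_wpDl; [exact: normr_ge0 | exact: ltr01].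
have n1' : `|t| + 1 != 0 by rewrite gt_eqF.
have e0 : 0 < - a / (`|t| + 1) by rewrite divr_gt0 // oppr_gt0.
have := H _ e0.
have -> : a + - a / (`|t| + 1) * t = a * ((`|t| + 1 - t) / (`|t| + 1)).
  by field.
rewrite lt_geF // nmulr_rlt0 // divr_gt0 // subr_gt0.
apply: (le_lt_trans (real_ler_norm rt)); by rewrite ltrDl ltr01.
Qed.

Lemma ctr_scalar {C : numClosedFieldType} k (a : C) : ctr (a%:M : 'M[C]_k) = a^*%:M.
Proof. by apply/matrixP => i j; rewrite !mxE eq_sym rmorphMn. Qed.

Lemma norm_pos {C : numClosedFieldType} k (w : 'cV[C]_k) : w != 0 -> 0 < (ctr w *m w) 0 0.
Proof.
move=> w0; rewrite lt_def; have := (psd1 k).2 w; rewrite mulmx1 => -> ; rewrite andbT.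
apply: contraNneq w0; rewrite mxE => h; apply/eqP/matrixP => i j; rewrite ord1 mxE.
have hF : forall l : 'I_k, true -> 0 <= ctr w 0 l * w l 0.
  by move=> l _; rewrite !mxE mulrC mul_conjC_ge0.
have := psumr_eq0P hF h (i:=i) isT; rewrite !mxE => /eqP.
by rewrite mulf_eq0 conjC_eq0 orbb => /eqP.
Qed.

Lemma dir21 {C : numClosedFieldType} n m (phi : 'M[C]_n -> 'M[C]_m) phis :
  positive_map phi -> hs_adjoint phi phis ->
  (forall X, pdmx X -> psd_op (block_op phi phis X)) ->
  forall K, loewner_le (ctr (phi K) *m phi K) (phi (ctr K *m K)).
Proof.
move=> pos adj H2 K.
have Ph : ctr (phi (ctr K *m K)) = phi (ctr K *m K) := (pos _ (psd_gram K)).1.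
set L := phi K; set F := phi (ctr K *m K).
set D := F - ctr L *m L.
have Dh : ctr D = D by rewrite /D ctrD ctrN ctrM ctrK Ph.
have HT : forall X, pdmx X -> 0 <= \tr (D *m X).
  move=> X HX; have Xu := pd_unit HX; have Xh := HX.1.
  have := H2 X HX (K, - (L *m X)); rewrite /psd_op Qexp // -/L -/F.
  set c := \tr (ctr L *m L *m X).
  have u1 : \tr (ctr (- (L *m X)) *m L) = - c.
    by rewrite ctrN ctrM Xh mulNmx linearN /= -mulmxA mxtrace_mulC.
  have u2 : \tr (ctr (- (L *m X)) *m - (L *m X) *m invmx X) = c.
    rewrite ctrN ctrM Xh mulNmx mulmxN opprK !mulmxA mulmxK //.
    by rewrite -mulmxA mxtrace_mulC.
  have u3 : (- c)^* = - c.
    have u3' : c^* = c by rewrite /c trC !ctrM Xh -mulmxA mxtrace_mulC ctrK mulmxA.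
    by rewrite rmorphN; congr (- _); exact: u3'.
  rewrite u1 u2 u3 /D mulmxBl linearB /= -/c.
  by have -> : \tr (F *m X) + - c + - c + c = \tr (F *m X) - c by ring.
split => // v.
set a := (ctr v *m D *m v) 0 0.
have ra : a \is Num.real.
  have hM : ctr (ctr v *m D *m v) = ctr v *m D *m v by rewrite !ctrM ctrK Dh mulmxA.
  have e1 : forall M : 'M[C]_1, (ctr M) 0 0 = (M 0 0)^* by move=> M; rewrite !mxE.
  by apply/CrealP; rewrite /a -e1 hM.
have rt : \tr D \is Num.real by apply/CrealP; rewrite trC Dh.
apply: (eps_arg ra rt) => e e0.
have re : e^* = e by apply/CrealP/gtr0_real.
have HX : pdmx (v *m ctr v + e%:M).
  split; first by rewrite ctrD ctrM ctrK ctr_scalar re.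
  move=> w w0; rewrite mulmxDr mulmxDl mxE.
  apply: ltr_wpDl.
    have := psd_diag_ge0 (ctr w *m v) 0 (psd1 1).
    by rewrite mulmx1 ctrM ctrK !mulmxA.
  by rewrite mul_mx_scalar -scalemxAl mxE mulr_gt0 // norm_pos.
have := HT _ HX; rewrite mulmxDr mxtraceD mul_mx_scalar mxtraceZ.
by rewrite mulmxA mxtrace_mulC mulmxA trace_mx11.
Qed.

Local Open Scope complex_scope.

Theorem theorem4p1 (R : realType) (n m : nat)
  (phi : {linear 'M[R[i]]_n -> 'M[R[i]]_m})
  (phis : 'M[R[i]]_m -> 'M[R[i]]_n) :
  positive_map phi -> hs_adjoint phi phis ->
  ((forall K : 'M[R[i]]_n,
      loewner_le (ctr (phi K) *m phi K) (phi (ctr K *m K))) <->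
   (forall X : 'M[R[i]]_m, pdmx X -> psd_op (block_op phi phis X))).
Proof.
move=> pos adj; split; [exact: dir12 | exact: dir21].
Qed.
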